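(* Let $2\le p\le n$, $\beta_1\neq0$, $z_1,\dots,z_p\in\mathbb R$, and for $\lambda\ge0$ let $$L_p(\lambda)=\frac1n\Big(\beta_1-\operatorname{sgn}(z_1)(|z_1|-\lambda)_+\Big)^2+\frac1n\sum_{j=2}^p\big((|z_j|-\lambda)_+\big)^2,\quad L_1(\lambda)=\frac1n\Big(\beta_1-\operatorname{sgn}(z_1)(|z_1|-\lambda)_+\Big)^2,$$ with $L_p(\lambda_p^* )=\min_{\lambda\ge0}L_p(\lambda)$ and $L_1(\lambda_1^* )=\min_{\lambda\ge0}L_1(\lambda)$. Assume $\operatorname{sgn}(\beta_1)=\operatorname{sgn}(z_1)$ and $\max_{2\le j\le p}|z_j|>|z_1|$. Then $L_p(\lambda_p^* )>L_1(\lambda_1^* )$.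
   Context: $(a)_+=\max(a,0)$; $\operatorname{sgn}$ is the sign function. In the paper's setting $\mathbf z=\mathbf X^T\mathbf y$ for an orthonormal design with $\mathbf y=\mathbf X\boldsymbol\beta_0+\boldsymbol\varepsilon$, $\boldsymbol\beta_0=(\beta_1,0,\dots,0)^T$; $L_p$ and $L_1$ are the Lasso losses using all $p$ predictors and only the true predictor, respectively. *)

(* Defs.v *)
From Stdlib Require Import Reals Lra.
Open Scope R_scope.

Definition sgn (x : R) : R :=
  if Rlt_dec 0 x then 1 else if Rlt_dec x 0 then -1 else 0.

Definition pos_part (a : R) : R := Rmax a 0.

Definition L1 (n : nat) (beta1 : R) (z : nat -> R) (lam : R) : R :=
  / INR n * (beta1 - sgn (z 1%nat) * pos_part (Rabs (z 1%nat) - lam)) ^ 2.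

Definition Lp (n p : nat) (beta1 : R) (z : nat -> R) (lam : R) : R :=
  L1 n beta1 z lam
  + / INR n * sum_f 2 p (fun j => (pos_part (Rabs (z j) - lam)) ^ 2).

(* Main.v *)
Require Import Defs.
From Stdlib Require Import Reals Lra Lia.
Open Scope R_scope.

Lemma sum_R0_ge_term (f : nat -> R) (N k : nat) :
  (forall i, (i <= N)%nat -> 0 <= f i) -> (k <= N)%nat -> f k <= sum_f_R0 f N.
Proof.
  induction N as [|N IH]; intros Hf Hk; simpl.
  - replace k with 0%nat by lia. lra.
  - destruct (Nat.eq_dec k (S N)) as [->|Hne].
    + assert (0 <= sum_f_R0 f N).
      { clear IH Hk. assert (forall i, (i <= N)%nat -> 0 <= f i) by (intros; apply Hf; lia).
        clear Hf. induction N as [|N IHN]; simpl. apply H; lia.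
        assert (0 <= f (S N)) by (apply H; lia).
        assert (0 <= sum_f_R0 f N) by (apply IHN; intros; apply H; lia). lra. }
      lra.
    + assert (f k <= sum_f_R0 f N) by (apply IH; [intros; apply Hf; lia | lia]).
      assert (0 <= f (S N)) by (apply Hf; lia). lra.
Qed.

Lemma sum_f_ge_term (f : nat -> R) (s N k : nat) :
  (forall i, 0 <= f i) -> (s <= k <= N)%nat -> f k <= sum_f s N f.
Proof.
  intros Hf Hk. unfold sum_f.
  replace (f k) with ((fun x => f (x + s)%nat) (k - s)%nat)
    by (f_equal; lia).
  apply (sum_R0_ge_term (fun x => f (x + s)%nat)); [intros; apply Hf | lia].
Qed.

Lemma sum_f_nonneg (f : nat -> R) (s N : nat) :
  (forall i, 0 <= f i) -> 0 <= sum_f s N f.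
Proof. intros Hf. unfold sum_f. apply cond_pos_sum. intros; apply Hf. Qed.

Theorem lemma2p4 (n p : nat) (beta1 : R) (z : nat -> R) (lamp lam1 : R) :
  (2 <= p)%nat -> (p <= n)%nat -> beta1 <> 0 ->
  0 <= lamp -> (forall lam, 0 <= lam -> Lp n p beta1 z lamp <= Lp n p beta1 z lam) ->
  0 <= lam1 -> (forall lam, 0 <= lam -> L1 n beta1 z lam1 <= L1 n beta1 z lam) ->
  sgn beta1 = sgn (z 1%nat) ->
  (exists j, (2 <= j <= p)%nat /\ Rabs (z j) > Rabs (z 1%nat)) ->
  Lp n p beta1 z lamp > L1 n beta1 z lam1.
Proof.
  intros Hp Hpn Hb Hlamp _ Hlam1 H1 Hsg [j [Hj Hzj]].
  assert (Hn : 0 < INR n) by (apply lt_0_INR; lia).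
  assert (Hin : 0 < / INR n) by (apply Rinv_0_lt_compat; lra).
  assert (HS : forall lam, 0 <= sum_f 2 p (fun j => (pos_part (Rabs (z j) - lam)) ^ 2)).
  { intros lam; apply sum_f_nonneg; intros; apply pow2_ge_0. }
  unfold Lp.
  destruct (Rlt_dec lamp (Rabs (z j))) as [Hlt|Hge].
  - assert (Hj2 : (pos_part (Rabs (z j) - lamp)) ^ 2 <=
                  sum_f 2 p (fun j => (pos_part (Rabs (z j) - lamp)) ^ 2)).
    { apply (sum_f_ge_term (fun j => (pos_part (Rabs (z j) - lamp)) ^ 2)).
      intros; apply pow2_ge_0. lia. }
    assert (Hpp : pos_part (Rabs (z j) - lamp) = Rabs (z j) - lamp).
    { unfold pos_part. apply Rmax_left. lra. }
    rewrite Hpp in Hj2.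
    assert (0 < (Rabs (z j) - lamp) ^ 2) by (apply pow_lt; lra).
    specialize (H1 lamp Hlamp).
    assert (0 < / INR n * sum_f 2 p (fun j => (pos_part (Rabs (z j) - lamp)) ^ 2))
      by (apply Rmult_lt_0_compat; lra).
    lra.
  - unfold L1 in *. set (a := Rabs (z 1%nat)) in *.
    set (m := Rmin a (Rabs beta1)).
    assert (Hz1 : z 1%nat <> 0).
    { intro E. rewrite E in Hsg. unfold sgn in Hsg.
      destruct (Rlt_dec 0 0); [lra|]. destruct (Rlt_dec 0 0); [lra|].
      destruct (Rlt_dec 0 beta1); [lra|]. destruct (Rlt_dec beta1 0); [lra|].
      apply Hb; lra. }
    assert (Ha : 0 < a) by (apply Rabs_pos_lt; exact Hz1).
    assert (Hbp : 0 < Rabs beta1) by (apply Rabs_pos_lt; exact Hb).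
    assert (Hm1 : m <= a) by apply Rmin_l.
    assert (Hm2 : m <= Rabs beta1) by apply Rmin_r.
    assert (Hm0 : 0 < m) by (unfold m; apply Rmin_glb_lt; lra).
    specialize (H1 (a - m) ltac:(lra)).
    assert (Hq1 : pos_part (a - (a - m)) = m).
    { unfold pos_part. replace (a - (a - m)) with m by ring. apply Rmax_left. lra. }
    assert (Hq2 : pos_part (a - lamp) = 0).
    { unfold pos_part. apply Rmax_right. lra. }
    rewrite Hq1 in H1. rewrite Hq2.
    assert (Hlt : (beta1 - sgn (z 1%nat) * m) ^ 2 < (beta1 - sgn (z 1%nat) * 0) ^ 2).
    { rewrite <- Hsg. unfold sgn.
      destruct (Rlt_dec 0 beta1).
      - rewrite Rabs_right in Hm2 by lra. nra.
      - destruct (Rlt_dec beta1 0); [|exfalso; apply Hb; lra].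
        rewrite Rabs_left in Hm2 by lra. nra. }
    assert (/ INR n * (beta1 - sgn (z 1%nat) * m) ^ 2 <
            / INR n * (beta1 - sgn (z 1%nat) * 0) ^ 2)
      by (apply Rmult_lt_compat_l; lra).
    specialize (HS lamp).
    assert (0 <= / INR n * sum_f 2 p (fun j => (pos_part (Rabs (z j) - lamp)) ^ 2))
      by (apply Rmult_le_pos; lra).
    lra.
Qed.
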